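(* For all positive integers $k$, $s$ and $n$, $$\sum_{d\mid k}\bigl|c_d^{(s)}(n)\bigr| = 2^{\omega\left(\frac{k^s}{(k^s,n)_s}\right)}\,(k^s,n)_s .$$
   Context: For positive integers $a,b,s$, the generalized gcd $(a,b)_s$ is the largest $d^s$ ($d\in\mathbb{N}$) such that $d^s\mid a$ and $d^s\mid b$. The Cohen–Ramanujan sum is defined for positive integers $q,n,s$ by $$c_q^{(s)}(n)=\sum_{\substack{h=1\\ (h,q^s)_s=1}}^{q^s} e^{2\pi i n h/q^s}.$$ $\omega(m)$ denotes the number of distinct prime divisors of $m$ (so $\omega(1)=0$). *)

(* Defs.v *)
From mathcomp Require Import all_boot all_order all_algebra.
From mathcomp Require Import complex.
From mathcomp Require Import reals trigo.
Set Implicit Arguments. Unset Strict Implicit. Unset Printing Implicit Defensive.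
Import Order.TTheory GRing.Theory Num.Theory.

(* generalized gcd (a,b)_s : the largest d^s (d in N) dividing both a and b.
   For a > 0 any such d satisfies d <= a, so d ranges over 0..a. *)
Definition ggcd (s a b : nat) : nat :=
  \max_(d < a.+1 | (d ^ s %| a) && (d ^ s %| b)) d ^ s.

Definition omega (m : nat) : nat := size (primes m).

Local Open Scope ring_scope.
Local Open Scope complex_scope.

Definition expi (R : realType) (x : R) : R[i] := (cos x) +i* (sin x).

Definition cohen_ramanujan (R : realType) (s q n : nat) : R[i] :=
  \sum_(1 <= h < (q ^ s).+1 | ggcd s h (q ^ s) == 1%N)
     expi ((2 * pi * (n * h)%:R) / (q ^ s)%:R : R).

(* Main.v *)
Require Import Defs.
From mathcomp Require Import all_boot all_order all_algebra.
From mathcomp Require Import complex.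
From mathcomp Require Import reals trigo.
From mathcomp.algebra_tactics Require Import ring lra.
From mathcomp Require Import zify.
Import Order.TTheory GRing.Theory Num.Theory.
Set Implicit Arguments. Unset Strict Implicit.

Lemma gcd_split a b d : coprime a b -> d %| a * b ->
  d = gcdn d a * gcdn d b.
Proof.
move=> cab dab.
have cg : coprime (gcdn d a) (gcdn d b).
  by apply: (coprime_dvdl (dvdn_gcdr d a)); apply: (coprime_dvdr (dvdn_gcdr d b)).
apply/eqP; rewrite eqn_dvd; apply/andP; split; last first.
  by rewrite Gauss_dvd // dvdn_gcdl dvdn_gcdl.
have h1 : d %| gcdn d a * b.
  by rewrite muln_gcdl dvdn_gcd dvdn_mulr.
have h2 : d %| gcdn d a * d by rewrite dvdn_mull.
have : d %| gcdn (gcdn d a * b) (gcdn d a * d) by rewrite dvdn_gcd h1 h2.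
rewrite -muln_gcdr (gcdnC b d).
by [].
Qed.

Lemma divisorsM a b : 0 < a -> 0 < b -> coprime a b ->
  perm_eq (divisors (a * b)) [seq x * y | x <- divisors a, y <- divisors b].
Proof.
move=> a0 b0 cab; apply: uniq_perm; first exact: divisors_uniq.
  apply: allpairs_uniq; [exact: divisors_uniq | exact: divisors_uniq |].
  move=> [x1 y1] [x2 y2] /allpairsP[[u1 v1] /= [u1a v1b [-> ->]]].
  move=> /allpairsP[[u2 v2] /= [u2a v2b [-> ->]]] /= E.
  rewrite -!dvdn_divisors // in u1a v1b u2a v2b.
  have c12 : coprime u1 v2 by apply: (coprime_dvdl u1a); apply: (coprime_dvdr v2b).
  have c21 : coprime u2 v1 by apply: (coprime_dvdl u2a); apply: (coprime_dvdr v1b).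
  have d1 : u1 %| u2 by rewrite -(Gauss_dvdl _ c12) -E dvdn_mulr.
  have d2 : u2 %| u1 by rewrite -(Gauss_dvdl _ c21) E dvdn_mulr.
  have eu : u1 = u2 by apply/eqP; rewrite eqn_dvd d1 d2.
  have u0 : 0 < u1 by apply: dvdn_gt0 u1a.
  have ev : v1 = v2 by apply/eqP; rewrite -(eqn_pmul2l u0) E eu.
  by rewrite eu ev.
move=> d; apply/idP/allpairsP.
  rewrite -dvdn_divisors ?muln_gt0 ?a0 // => dab.
  exists (gcdn d a, gcdn d b); rewrite /= -!dvdn_divisors // !dvdn_gcdr.
  by split=> //; apply: gcd_split.
move=> [[x y] /= [xa yb ->]]; rewrite -dvdn_divisors ?muln_gt0 ?a0 //.
by rewrite -!dvdn_divisors // in xa yb; apply: dvdn_mul.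
Qed.

Lemma big_divisorsM (R : Type) (idx : R) (op : Monoid.com_law idx) (F : nat -> R) a b :
  0 < a -> 0 < b -> coprime a b ->
  \big[op/idx]_(d <- divisors (a * b)) F d =
  \big[op/idx]_(x <- divisors a) \big[op/idx]_(y <- divisors b) F (x * y).
Proof.
move=> a0 b0 cab; rewrite (perm_big _ (divisorsM a0 b0 cab)).
by rewrite big_allpairs_dep.
Qed.

Definition Mult (R : Type) (idx : R) (op : Monoid.com_law idx) (N : nat)
  (g : nat -> nat -> R) (r : nat) : R :=
  \big[op/idx]_(p < N | prime p) g p (logn p r).

Lemma logn_coprime0 p x y : coprime x y -> 0 < logn p x -> logn p y = 0.
Proof.
move=> cxy hx; apply/eqP; rewrite -leqn0 leqNgt; apply/negP=> hy.
rewrite !logn_gt0 !mem_primes in hx hy.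
case/and3P: hx => pp _ px; case/and3P: hy => _ _ py.
have : p %| gcdn x y by rewrite dvdn_gcd px py.
by rewrite (eqP cxy) dvdn1 => /eqP p1; rewrite p1 in pp.
Qed.

Lemma Mult_mul (R : Type) (idx : R) (op : Monoid.com_law idx) N g x y :
  (forall p, g p 0 = idx) -> 0 < x -> 0 < y -> coprime x y ->
  Mult op N g (x * y) = op (Mult op N g x) (Mult op N g y).
Proof.
move=> g0 x0 y0 cxy; rewrite /Mult -big_split /=; apply: eq_bigr => p _.
rewrite lognM //; case: (posnP (logn p x)) => [-> | hx].
  by rewrite g0 add0n Monoid.mul1m.
by rewrite (logn_coprime0 cxy hx) addn0 g0 Monoid.mulm1.
Qed.

Lemma Mult_pow (R : Type) (idx : R) (op : Monoid.com_law idx) N g p a :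
  (forall q, g q 0 = idx) -> prime p -> p < N ->
  Mult op N g (p ^ a) = g p a.
Proof.
move=> g0 pp pN; rewrite /Mult (bigD1 (Ordinal pN)) //= big1 ?Monoid.mulm1.
  by rewrite lognX logn_prime // eqxx muln1.
move=> q /andP[_ qp]; rewrite lognX logn_prime //.
have -> : (val q == p) = false by apply/negP => /eqP h; apply: (negP qp); apply/eqP/val_inj.
by rewrite muln0 g0.
Qed.

Lemma ML (R : Type) (idx : R) (op : Monoid.com_law idx) N (h : nat -> R) :
  h 1 = idx ->
  (forall x y, 0 < x -> 0 < y -> coprime x y -> h (x * y) = op (h x) (h y)) ->
  forall r, 0 < r -> r < N -> h r = Mult op N (fun p j => h (p ^ j)) r.
Proof.
move=> h1 hM; elim/ltn_ind=> r IH r0 rN.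
have g0 : forall p, (fun p j => h (p ^ j)) p 0 = idx by move=> p /=; rewrite expn0.
case: (ltngtP r 1) => [r1 | r1 | ->]; first by move: r1; rewrite ltnS leqn0 => /eqP r00; rewrite r00 in r0.
  set p := pdiv r.
  have pp : prime p by apply: pdiv_prime.
  have pr : p %| r by apply: pdiv_dvd.
  have a0 : 0 < logn p r by rewrite logn_gt0 mem_primes pp r0 pr.
  have rp1 : 1 < r`_p by rewrite p_part -(expn0 p) ltn_exp2l ?prime_gt1.
  have rq0 : 0 < r`_p^' by apply: part_gt0.
  have rp0 : 0 < r`_p by apply: part_gt0.
  have Er : r`_p * r`_p^' = r by apply: partnC.
  have ltq : r`_p^' < r by rewrite -{2}Er ltn_Pmull.
  have pN : p < N by apply: leq_ltn_trans rN; apply: dvdn_leq.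
  rewrite -{1}Er hM // ?coprime_partC // (IH _ ltq rq0 (ltn_trans ltq rN)).
  rewrite -{3}Er Mult_mul // ?coprime_partC // p_part Mult_pow //.
by rewrite h1 /Mult big1 // => p _; rewrite logn1.
Qed.

Local Open Scope ring_scope.

Lemma sum_div_mul (f : nat -> int) a b :
  (forall x y, (0 < x)%N -> (0 < y)%N -> coprime x y -> f (x * y)%N = f x * f y) ->
  (0 < a)%N -> (0 < b)%N -> coprime a b ->
  \sum_(d <- divisors (a * b)) f d =
  (\sum_(d <- divisors a) f d) * (\sum_(d <- divisors b) f d).
Proof.
move=> fM a0 b0 cab; rewrite big_divisorsM // big_distrl /=.
apply: eq_big_seq => x xa; rewrite big_distrr /=; apply: eq_big_seq => y yb.
rewrite -dvdn_divisors // in xa; rewrite -dvdn_divisors // in yb.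
apply: fM; [exact: dvdn_gt0 xa | exact: dvdn_gt0 yb |].
by apply: (coprime_dvdl xa); apply: (coprime_dvdr yb).
Qed.

Lemma divisors_pow p a : prime p ->
  perm_eq (divisors (p ^ a)) [seq p ^ i | i <- iota 0 a.+1]%N.
Proof.
move=> pp; apply: uniq_perm; first exact: divisors_uniq.
  by rewrite map_inj_uniq ?iota_uniq //; apply: expnI; apply: prime_gt1.
move=> d; rewrite -dvdn_divisors ?expn_gt0 ?prime_gt0 //.
apply/dvdn_pfactor/mapP => // [[m ma ->] | [m]].
  by exists m => //; rewrite mem_iota.
by rewrite mem_iota add0n ltnS => ma ->; exists m.
Qed.

Lemma sum_div_pow (f : nat -> int) p a : prime p ->
  \sum_(d <- divisors (p ^ a)) f d = \sum_(i < a.+1) f (p ^ i)%N.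
Proof.
move=> pp; rewrite (perm_big _ (divisors_pow a pp)) big_map.
by rewrite -(big_mkord xpredT (fun i => f (p ^ i)%N)) /index_iota subn0.
Qed.

Definition psi (s n p i : nat) : int :=
  (p ^ (i * s))%:Z *+ (i <= logn p n %/ s)%N -
  (if i is j.+1 then (p ^ (j * s))%:Z *+ (j <= logn p n %/ s)%N else 0).

Definition cc (N s n d : nat) : int := Mult *%R N (psi s n) d.

Lemma psi0 s n p : psi s n p 0 = 1.
Proof. by rewrite /psi mul0n expn0 leq0n subr0. Qed.

Lemma cc_mul N s n x y : (0 < x)%N -> (0 < y)%N -> coprime x y ->
  cc N s n (x * y) = cc N s n x * cc N s n y.
Proof. by move=> *; rewrite /cc Mult_mul // => p; apply: psi0. Qed.

Lemma cc_pow N s n p a : prime p -> (p < N)%N -> cc N s n (p ^ a) = psi s n p a.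
Proof. by move=> pp pN; rewrite /cc Mult_pow // => q; apply: psi0. Qed.

Lemma psi_tele s n p a :
  \sum_(i < a.+1) psi s n p i = (p ^ (a * s))%:Z *+ (a <= logn p n %/ s)%N.
Proof.
elim: a => [|a IH]; first by rewrite big_ord1 psi0 mul0n expn0 leq0n.
rewrite big_ord_recr /= IH /psi.
case: (leqP a.+1 (logn p n %/ s)) => h.
  by rewrite (ltnW h) addrC subrK.
case: (leqP a (logn p n %/ s)) => h2; last by rewrite /= !mulr0n.
by rewrite /= !mulr0n !mulr1n sub0r addrN.
Qed.

Definition Fr (s n r : nat) : int := (r ^ s)%:Z *+ (r ^ s %| n)%N.

Lemma Fr_mul s n x y : coprime x y ->
  Fr s n (x * y) = Fr s n x * Fr s n y.
Proof.
move=> cxy; rewrite /Fr expnMn Gauss_dvd; last by apply: coprimeXl; apply: coprimeXr.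
by case: (x ^ s %| n)%N; case: (y ^ s %| n)%N; rewrite ?mulr0 ?mul0r ?mulr1n // PoszM.
Qed.

Lemma Fr_pow s n p a : (0 < s)%N -> (0 < n)%N -> prime p ->
  Fr s n (p ^ a) = (p ^ (a * s))%:Z *+ (a <= logn p n %/ s)%N.
Proof.
move=> s0 n0 pp; rewrite /Fr -expnM pfactor_dvdn // leq_divRL //.
Qed.

Lemma sum_cc N s n r : (0 < s)%N -> (0 < n)%N -> (0 < r)%N -> (r < N)%N ->
  \sum_(d <- divisors r) cc N s n d = Fr s n r.
Proof.
move=> s0 n0 r0 rN.
have h1 : forall f : nat -> int, \sum_(d <- divisors 1) f d = f 1%N.
  by move=> f; rewrite /= big_cons big_nil addr0.
rewrite (@ML _ _ *%R N (fun r => \sum_(d <- divisors r) cc N s n d)) //; first last.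
- by move=> x y x0 y0 cxy; apply: sum_div_mul => //; apply: cc_mul.
- by rewrite h1 /cc /Mult big1 // => p _; rewrite logn1 psi0.
rewrite (@ML _ _ *%R N (Fr s n)) //; first last.
- by move=> x y _ _; apply: Fr_mul.
- by rewrite /Fr exp1n dvd1n.
rewrite /Mult; apply: eq_bigr => p pp.
rewrite sum_div_pow // Fr_pow // -psi_tele; apply: eq_bigr => i _.
by rewrite cc_pow.
Qed.

Local Open Scope nat_scope.

Lemma dvdn_logn d a : 0 < d -> 0 < a ->
  (forall p, prime p -> logn p d <= logn p a) -> d %| a.
Proof.
move=> d0 a0 H; apply/dvdn_partP => // p; rewrite mem_primes => /and3P[pp _ _].
by rewrite p_part pfactor_dvdn // H.
Qed.

Lemma lcm_pow_dvd s x y a : 0 < s -> x ^ s %| a -> y ^ s %| a -> (lcmn x y) ^ s %| a.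
Proof.
move=> s0 hx hy; have [-> | a0] := posnP a; first exact: dvdn0.
have x0 : 0 < x.
  case: (posnP x) hx => // ->; rewrite exp0n // dvd0n => /eqP a00.
  by rewrite a00 in a0.
have y0 : 0 < y.
  case: (posnP y) hy => // ->; rewrite exp0n // dvd0n => /eqP a00.
  by rewrite a00 in a0.
apply: dvdn_logn => //; first by rewrite expn_gt0 lcmn_gt0 x0 y0.
move=> p pp; rewrite lognX logn_lcm //.
have ex := dvdn_leq_log p a0 hx; have ey := dvdn_leq_log p a0 hy.
rewrite lognX in ex; rewrite lognX in ey.
by case: (leqP (logn p x) (logn p y)).
Qed.

Lemma pow_dvd_pos e s a : 0 < a -> e ^ s %| a -> 0 < s -> 0 < e.
Proof.
move=> a0 h s0; case: (posnP e) h => // ->; rewrite exp0n // dvd0n => /eqP a00.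
by rewrite a00 in a0.
Qed.

Lemma ggcd_spec s a b : 0 < s -> 0 < a ->
  exists D, [/\ ggcd s a b = D ^ s, D ^ s %| a, D ^ s %| b &
    forall e, e ^ s %| a -> e ^ s %| b -> e %| D].
Proof.
move=> s0 a0; rewrite /ggcd.
set A := [pred d : 'I_a.+1 | (d ^ s %| a) && (d ^ s %| b)].
have o1 : 1 < a.+1 by rewrite ltnS.
have cA : 0 < #|A|.
  by apply/card_gt0P; exists (Ordinal o1); rewrite inE /= exp1n !dvd1n.
have [i0 Ai0 E] := eq_bigmax_cond (fun d : 'I_a.+1 => d ^ s) cA.
move: Ai0; rewrite inE => /andP[ha hb].
exists i0; split => //.
  move=> e ea eb.
  set L := lcmn e i0.
  have La : L ^ s %| a by apply: lcm_pow_dvd.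
  have Lb : L ^ s %| b by apply: lcm_pow_dvd.
  have L0 : 0 < L := pow_dvd_pos a0 La s0.
  have Lle : L < a.+1.
    rewrite ltnS; apply: leq_trans (dvdn_leq a0 La).
    by rewrite -{1}(expn1 L) leq_pexp2l.
  have := @leq_bigmax_cond _ A (fun d : 'I_a.+1 => d ^ s) (Ordinal Lle).
  rewrite inE /= La Lb => /(_ isT) LD0.
  have : L ^ s <= i0 ^ s by rewrite -E; exact: LD0.
  rewrite leq_exp2r // => LD.
  have DL : i0 %| L by apply: dvdn_lcmr.
  have eqL : L = i0 by apply/eqP; rewrite eqn_leq LD dvdn_leq.
  by rewrite -eqL dvdn_lcml.
Qed.

Lemma ggcd_char s a b E : 0 < s -> 0 < a -> E ^ s %| a -> E ^ s %| b ->
  (forall e, e ^ s %| a -> e ^ s %| b -> e %| E) -> ggcd s a b = E ^ s.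
Proof.
move=> s0 a0 Ea Eb EM; have [D [-> Da Db DM]] := ggcd_spec b s0 a0.
have : D == E by rewrite eqn_dvd EM // DM.
by move/eqP->.
Qed.

Lemma ggcd_scale s x a b : 0 < s -> 0 < x -> 0 < a ->
  ggcd s (x ^ s * a) (x ^ s * b) = x ^ s * ggcd s a b.
Proof.
move=> s0 x0 a0; have [D [-> Da Db DM]] := ggcd_spec b s0 a0.
rewrite -expnMn; apply: ggcd_char => //.
- by rewrite muln_gt0 expn_gt0 x0 a0.
- by rewrite expnMn dvdn_pmul2l ?expn_gt0 ?x0.
- by rewrite expnMn dvdn_pmul2l ?expn_gt0 ?x0.
move=> e ea eb.
set L := lcmn e x.
have xs : x ^ s %| x ^ s * a by apply: dvdn_mulr.
have xsb : x ^ s %| x ^ s * b by apply: dvdn_mulr.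
have La : L ^ s %| x ^ s * a by apply: lcm_pow_dvd.
have Lb : L ^ s %| x ^ s * b by apply: lcm_pow_dvd.
have := dvdn_lcmr e x; rewrite -/L => /dvdnP[t Lt].
rewrite Lt mulnC expnMn dvdn_pmul2l ?expn_gt0 ?x0 // in La.
rewrite Lt mulnC expnMn dvdn_pmul2l ?expn_gt0 ?x0 // in Lb.
apply: (dvdn_trans (dvdn_lcml e x)); rewrite -/L Lt mulnC.
by rewrite dvdn_pmul2l // DM.
Qed.

Lemma pos_pow x s : 0 < x -> 0 < x ^ s.
Proof. by move=> x0; rewrite expn_gt0 x0. Qed.

Lemma gg_mul s n x y : 0 < s -> 0 < x -> 0 < y -> coprime x y ->
  ggcd s ((x * y) ^ s) n = ggcd s (x ^ s) n * ggcd s (y ^ s) n.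
Proof.
move=> s0 x0 y0 cxy.
have [Dx [-> Dxa Dxb DxM]] := ggcd_spec n s0 (pos_pow s x0).
have [Dy [-> Dya Dyb DyM]] := ggcd_spec n s0 (pos_pow s y0).
have Dxx : Dx %| x by rewrite -(dvdn_pexp2r _ _ s0).
have Dyy : Dy %| y by rewrite -(dvdn_pexp2r _ _ s0).
rewrite -expnMn; apply: ggcd_char => //.
- by apply: pos_pow; rewrite muln_gt0 x0.
- by rewrite !expnMn dvdn_mul.
- rewrite expnMn Gauss_dvd ?Dxb ?Dyb //.
  by apply: coprimeXl; apply: coprimeXr; apply: (coprime_dvdl Dxx); apply: (coprime_dvdr Dyy).
move=> e exy en.
have exy' : e %| x * y by rewrite -(dvdn_pexp2r _ _ s0).
rewrite (gcd_split cxy exy'); apply: dvdn_mul.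
  apply: DxM; first by apply: dvdn_exp2r; apply: dvdn_gcdr.
  by apply: dvdn_trans en; apply: dvdn_exp2r; apply: dvdn_gcdl.
apply: DyM; first by apply: dvdn_exp2r; apply: dvdn_gcdr.
by apply: dvdn_trans en; apply: dvdn_exp2r; apply: dvdn_gcdl.
Qed.

Lemma gg_pow s n p a : 0 < s -> 0 < n -> prime p ->
  ggcd s ((p ^ a) ^ s) n = p ^ (minn a (logn p n %/ s) * s).
Proof.
move=> s0 n0 pp; rewrite expnM; apply: ggcd_char => //.
- by apply: pos_pow; apply: pos_pow; apply: prime_gt0.
- by apply: dvdn_exp2r; apply: dvdn_exp2l; apply: geq_minl.
- by rewrite -expnM pfactor_dvdn // -leq_divRL // geq_minr.
move=> e ea en.
have : e %| p ^ a by rewrite -(dvdn_pexp2r _ _ s0).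
case/(dvdn_pfactor _ _ pp) => j ja ej.
rewrite ej dvdn_exp2l // leq_min ja.
by rewrite ej -expnM pfactor_dvdn // -leq_divRL // in en.
Qed.

Definition omega' := omega.

Lemma omega_mul a b : 0 < a -> 0 < b -> coprime a b ->
  omega (a * b) = omega a + omega b.
Proof.
move=> a0 b0 cab; rewrite /omega -size_cat; apply: perm_size.
apply: uniq_perm; first exact: primes_uniq.
  rewrite cat_uniq !primes_uniq andbT /=; apply/hasPn => p pb.
  apply/negP => pa.
  have h1 : 0 < logn p a by rewrite logn_gt0.
  by move: (logn_coprime0 cab h1); rewrite -logn_gt0 in pb; move=> E; rewrite E in pb.
by move=> p; rewrite primesM // mem_cat.
Qed.

Lemma omega1 : omega 1 = 0. Proof. by []. Qed.

Lemma omega_pow p e : prime p -> omega (p ^ e) = (0 < e).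
Proof.
move=> pp; case: e => [|e]; first by rewrite expn0.
by rewrite /omega primesX // primes_prime.
Qed.

Local Open Scope ring_scope.

Definition Tk s n k : int :=
  (2 ^ omega (k ^ s %/ ggcd s (k ^ s) n) * ggcd s (k ^ s) n)%N%:Z.

Lemma gg_dvd s n x : (0 < s)%N -> (0 < x)%N -> (ggcd s (x ^ s) n %| x ^ s)%N.
Proof. by move=> s0 x0; have [D [-> Da _ _]] := ggcd_spec n s0 (pos_pow s x0). Qed.

Lemma Tk_mul s n x y : (0 < s)%N -> (0 < x)%N -> (0 < y)%N -> coprime x y ->
  Tk s n (x * y) = Tk s n x * Tk s n y.
Proof.
move=> s0 x0 y0 cxy; rewrite /Tk gg_mul //.
have hx := gg_dvd n s0 x0; have hy := gg_dvd n s0 y0.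
set gx := ggcd s (x ^ s) n in hx *; set gy := ggcd s (y ^ s) n in hy *.
have gx0 : (0 < gx)%N := dvdn_gt0 (pos_pow s x0) hx.
have gy0 : (0 < gy)%N := dvdn_gt0 (pos_pow s y0) hy.
have Qx0 : (0 < x ^ s %/ gx)%N by rewrite divn_gt0 // dvdn_leq // pos_pow.
have Qy0 : (0 < y ^ s %/ gy)%N by rewrite divn_gt0 // dvdn_leq // pos_pow.
have -> : ((x * y) ^ s %/ (gx * gy) = (x ^ s %/ gx) * (y ^ s %/ gy))%N.
  rewrite expnMn -{1}(divnK hx) -{1}(divnK hy) mulnACA mulnK //.
  by rewrite muln_gt0 gx0.
rewrite omega_mul //; last first.
  apply: (@coprime_dvdl _ (x ^ s)); first exact: dvdn_div.
  apply: (@coprime_dvdr _ (y ^ s)); first exact: dvdn_div.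
  by apply: coprimeXl; apply: coprimeXr.
by rewrite -PoszM expnD mulnACA.
Qed.

Lemma ggcd1 s n : (0 < s)%N -> ggcd s 1 n = 1%N.
Proof.
move=> s0; rewrite -(exp1n s); apply: ggcd_char => //; rewrite ?exp1n ?dvd1n //.
by move=> e; rewrite -{1}(exp1n s) dvdn_pexp2r.
Qed.

Lemma Tk1 s n : (0 < s)%N -> Tk s n 1 = 1.
Proof. by move=> s0; rewrite /Tk exp1n ggcd1 // divn1. Qed.

Lemma Tk_pow s n p a : (0 < s)%N -> (0 < n)%N -> prime p ->
  Tk s n (p ^ a) = (2 ^ (logn p n %/ s < a) * p ^ (minn a (logn p n %/ s) * s))%N%:Z.
Proof.
move=> s0 n0 pp; rewrite /Tk gg_pow // -expnM -expnB ?prime_gt0 //; last first.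
  by rewrite leq_mul2r geq_minl orbT.
rewrite omega_pow //; congr (Posz (2 ^ _ * _)).
by rewrite subn_gt0 ltn_mul2r s0 gtn_min ltnn.
Qed.

Lemma psi_abs_sum s n p a : prime p ->
  \sum_(i < a.+1) `|psi s n p i| =
  (2 ^ (logn p n %/ s < a) * p ^ (minn a (logn p n %/ s) * s))%N%:Z.
Proof.
move=> pp; set w := (logn p n %/ s)%N.
elim: a => [|a IH]; first by rewrite big_ord1 psi0 /= min0n mul0n.
rewrite big_ord_recr /= IH /psi -/w.
case: (leqP a.+1 w) => h.
  have -> : (w < a)%N = false by rewrite ltnNge (ltnW h).
  rewrite (ltnW h) /= !mulr1n (minn_idPl (ltnW h)) !mul1n.
  rewrite ger0_norm; first by rewrite addrC subrK.
  by rewrite subr_ge0 lez_nat leq_pexp2l ?prime_gt0 // leq_mul2r leqnSn orbT.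
case: (leqP a w) => h2.
  have aw : a = w by apply/eqP; rewrite eqn_leq h2 -ltnS.
  rewrite /= mulr0n mulr1n sub0r normrN ger0_norm //.
  by rewrite -aw -PoszD expn0 expn1 mul1n mul2n -addnn.
by rewrite /= !mulr0n subrr normr0 addr0.
Qed.

Lemma sum_abs_cc N s n k : (0 < s)%N -> (0 < n)%N -> (0 < k)%N -> (k < N)%N ->
  \sum_(d <- divisors k) `|cc N s n d| = Tk s n k.
Proof.
move=> s0 n0 k0 kN.
have h1 : forall f : nat -> int, \sum_(d <- divisors 1) f d = f 1%N.
  by move=> f; rewrite /= big_cons big_nil addr0.
rewrite (@ML _ _ *%R N (fun r => \sum_(d <- divisors r) `|cc N s n d|)) //; first last.
- move=> x y x0 y0 cxy; apply: sum_div_mul => // u v u0 v0 cuv.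
  by rewrite cc_mul // normrM.
- by rewrite h1 /cc /Mult big1 // => p _; rewrite logn1 psi0.
rewrite (@ML _ _ *%R N (Tk s n)) //; first last.
- by move=> x y x0 y0; apply: Tk_mul.
- exact: Tk1.
rewrite /Mult; apply: eq_bigr => p pp.
rewrite sum_div_pow // Tk_pow // -psi_abs_sum //; apply: eq_bigr => i _.
by rewrite cc_pow.
Qed.

Local Open Scope ring_scope.

Lemma expiD (R : realType) (x y : R) : expi (x + y) = expi x * expi y.
Proof.
rewrite /expi cosD sinD /=; congr ((_ +i* _)%C).
by rewrite addrC.
Qed.

Lemma expi0 (R : realType) : expi (0 : R) = 1.
Proof. by rewrite /expi cos0 sin0. Qed.

Lemma expiMn (R : realType) (x : R) k : expi (x *+ k) = expi x ^+ k.
Proof.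
elim: k => [|k IH]; first by rewrite mulr0n expi0 expr0.
by rewrite mulrS expiD IH exprS.
Qed.

Lemma expi2pi (R : realType) k : expi (2 * pi * k%:R : R) = 1.
Proof.
rewrite mulr_natr expiMn -[2]/(1 + 1) mulrDl mul1r -mulr2n /expi cos2pi sin2pi.
by rewrite expr1n.
Qed.

Lemma expi_neq1 (R : realType) (x : R) : 0 < x -> x < 2 * pi -> expi x != 1.
Proof.
move=> x0 x2; apply/eqP; rewrite /expi => E.
have sx : sin x = 0 by case: E.
have cx : cos x = 1 by case: E.
case: (ltrgtP x pi) => h.
- have h0 : 0 < x < pi by rewrite x0 h.
  by move: (sin_gt0_pi h0); rewrite sx ltxx.
- have h1 : 0 < x - pi < pi.
    rewrite subr_gt0 h /= ltrBlDr.
    by move: x2; rewrite -[2]/(1 + 1) mulrDl mul1r.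
  move: (sin_gt0_pi h1).
  have : sin (x - pi + pi) = - sin (x - pi) by rewrite sinDpi.
  rewrite subrK sx => /eqP; rewrite eq_sym oppr_eq0 => /eqP ->.
  by rewrite ltxx.
- by move: cx; rewrite h cospi => /eqP; rewrite eq_sym -subr_eq0 opprK -[1 + 1]/2 pnatr_eq0.
Qed.

Lemma geom (R : realType) (M n : nat) : (0 < M)%N ->
  \sum_(1 <= h < M.+1) expi ((2 * pi * (n * h)%:R) / M%:R : R) =
  ((M * (M %| n))%N)%:R.
Proof.
move=> M0.
have MR : (M%:R : R) != 0 by rewrite pnatr_eq0 -lt0n.
set y : R := (2 * pi * n%:R) / M%:R.
have term : forall h, (2 * pi * (n * h)%:R) / M%:R = y *+ h.
  by move=> h; rewrite /y -mulr_natr natrM; ring.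
rewrite big_add1 /= big_mkord.
under eq_bigr do rewrite term expiMn.
have zM : expi y ^+ M = 1.
  rewrite -expiMn -mulr_natr /y mulrAC -mulrA mulfV // mulr1; exact: expi2pi.
case: (boolP (M %| n)%N) => [/dvdnP[q nq] | ndv].
  have -> : expi y = 1.
    by rewrite /y nq natrM mulrA -mulrA mulfV // mulr1 expi2pi.
  by under eq_bigr do rewrite expr1n; rewrite sumr_const card_ord muln1.
rewrite muln0.
have z1 : expi y != 1.
  set r := (n %% M)%N.
  have r0 : (0 < r)%N by rewrite lt0n; exact: ndv.
  have rM : (r < M)%N by rewrite ltn_mod.
  have -> : y = 2 * pi * (n %/ M)%N%:R + 2 * pi * r%:R / M%:R.
    rewrite /y {1}(divn_eq n M) natrD natrM; field.
    by [].
  rewrite expiD expi2pi mul1r; apply: expi_neq1.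
    by rewrite divr_gt0 ?ltr0n // mulr_gt0 ?ltr0n // mulr_gt0 ?pi_gt0.
  have p2 : (0 : R) < 2 * pi by rewrite mulr_gt0 ?pi_gt0 ?ltr0n.
  by rewrite ltr_pdivrMr ?ltr0n // ltr_pM2l // ltr_nat.
under eq_bigr do rewrite exprS.
rewrite -big_distrr /=.
have : (expi y - 1) * \sum_(i < M) expi y ^+ i = 0 by rewrite -subrX1 zM subrr.
move/eqP; rewrite mulf_eq0 subr_eq0 (negbTE z1) /= => /eqP ->.
by rewrite mulr0.
Qed.

Lemma RL (V : zmodType) (F : nat -> V) M t : (0 < M)%N ->
  (forall h, ~~ (M %| h)%N -> F h = 0) ->
  \sum_(1 <= h < (M * t).+1) F h = \sum_(1 <= j < t.+1) F (M * j)%N.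
Proof.
move=> M0 FM; elim: t => [|t IH]; first by rewrite muln0 !big_geq.
rewrite (big_cat_nat _ (n := (M * t).+1)) //=; last by rewrite ltnS leq_mul2l leqnSn orbT.
rewrite IH [in RHS]big_nat_recr //=; congr (_ + _).
rewrite mulnS addnC big_nat_recr /=; last by lia.
rewrite big_nat_cond big1 ?add0r // => h /andP[/andP[h1 h2] _].
apply: FM; apply/negP => /dvdnP[q hq].
rewrite hq [(q * M)%N]mulnC ltn_mul2l M0 /= in h1.
rewrite hq [(q * M)%N]mulnC addnC -mulnS ltn_mul2l M0 /= ltnS in h2.
by move: (leq_ltn_trans h2 h1); rewrite ltnn.
Qed.

Lemma ggcd_dvd_first s a b : (0 < s)%N -> (0 < a)%N -> (ggcd s a b %| a)%N.
Proof. by move=> s0 a0; have [D [-> Da _ _]] := ggcd_spec b s0 a0. Qed.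

Lemma inner_one (V : zmodType) s h r (E : V) : (0 < s)%N -> (0 < h)%N -> (0 < r)%N ->
  \sum_(m <- divisors r | ggcd s h (r ^ s) == (m ^ s)%N) E = E.
Proof.
move=> s0 h0 r0; have [D [-> Dh Dr _]] := ggcd_spec (r ^ s) s0 h0.
have Dr' : (D %| r)%N by rewrite -(dvdn_pexp2r _ _ s0).
have Din : D \in divisors r by rewrite -dvdn_divisors.
rewrite big_mkcond /= (bigD1_seq D Din (divisors_uniq r)) /= eqxx.
rewrite big1 ?addr0 // => m /negbTE mD.
by rewrite eqn_exp2r // eq_sym mD.
Qed.

Lemma divisors_refl r : (0 < r)%N ->
  perm_eq (divisors r) [seq (r %/ m)%N | m <- divisors r].
Proof.
move=> r0; apply: uniq_perm; first exact: divisors_uniq.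
  rewrite map_inj_in_uniq ?divisors_uniq // => m1 m2.
  rewrite -!dvdn_divisors // => d1 d2 E.
  have q0 : (0 < r %/ m1)%N by rewrite divn_gt0 ?(dvdn_gt0 r0) // dvdn_leq.
  apply/eqP; rewrite -(eqn_pmul2l q0); apply/eqP.
  by rewrite {2}E mulnC divnK // mulnC divnK.
move=> d; apply/idP/mapP.
  rewrite -dvdn_divisors // => dr; exists (r %/ d)%N.
    by rewrite -dvdn_divisors // dvdn_div.
  by rewrite divnA // mulKn // (dvdn_gt0 r0).
by move=> [m mr ->]; rewrite -dvdn_divisors //; apply: dvdn_div; rewrite dvdn_divisors.
Qed.

Lemma cr_block (R : realType) s r m n : (0 < s)%N -> (0 < r)%N -> (m %| r)%N ->
  \sum_(1 <= h < (r ^ s).+1 | ggcd s h (r ^ s) == (m ^ s)%N)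
     expi ((2 * pi * (n * h)%:R) / (r ^ s)%:R : R) =
  cohen_ramanujan R s (r %/ m) n.
Proof.
move=> s0 r0 mr.
have m0 : (0 < m)%N := dvdn_gt0 r0 mr.
have q0 : (0 < r %/ m)%N by rewrite divn_gt0 // dvdn_leq.
have rE : (r ^ s = m ^ s * (r %/ m) ^ s)%N by rewrite -expnMn mulnC divnK.
rewrite big_mkcond /= rE RL ?pos_pow //; last first.
  move=> h; case: eqP => // E ndv; exfalso; apply: (negP ndv).
  case: (posnP h) => [-> | h0]; first exact: dvdn0.
  by rewrite -E; apply: ggcd_dvd_first => //.
rewrite /cohen_ramanujan [in RHS]big_mkcond /=; apply: eq_big_nat => j /andP[j0 _].
rewrite ggcd_scale // -{2}(muln1 (m ^ s)%N) eqn_pmul2l ?pos_pow //.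
case: (_ == 1%N) => //; congr (expi _).
have ms : ((m ^ s)%:R : R) != 0 by rewrite pnatr_eq0 -lt0n pos_pow.
have qs : (((r %/ m) ^ s)%:R : R) != 0 by rewrite pnatr_eq0 -lt0n pos_pow.
rewrite !natrM; field.
by rewrite ms qs.
Qed.

Lemma sum_cr (R : realType) s n r : (0 < s)%N -> (0 < r)%N ->
  \sum_(d <- divisors r) cohen_ramanujan R s d n = (Fr s n r)%:~R.
Proof.
move=> s0 r0.
have -> : Fr s n r = ((r ^ s * (r ^ s %| n))%N)%:Z.
  by rewrite /Fr; case: (_ %| _)%N; rewrite ?muln1 ?muln0.
rewrite -pmulrn -(geom R n (pos_pow s r0)).
rewrite (perm_big _ (divisors_refl r0)) big_map /=.
transitivity (\sum_(m <- divisors r)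
  \sum_(1 <= h < (r ^ s).+1 | ggcd s h (r ^ s) == (m ^ s)%N)
     expi ((2 * pi * (n * h)%:R) / (r ^ s)%:R : R)).
  by apply: eq_big_seq => m; rewrite -dvdn_divisors // => mr; rewrite cr_block.
rewrite (exchange_big_dep xpredT) //=.
apply: eq_big_nat => h /andP[h0 _]; apply: inner_one => //.
Qed.

Lemma cr_eq (R : realType) N s n r : (0 < s)%N -> (0 < n)%N -> (0 < r)%N -> (r < N)%N ->
  cohen_ramanujan R s r n = (cc N s n r)%:~R.
Proof.
move=> s0 n0; elim/ltn_ind: r => r IH r0 rN.
have E1 := sum_cr R n s0 r0.
rewrite -(sum_cc (N:=N) s0 n0 r0 rN) rmorph_sum /= in E1.
have rin : r \in divisors r by rewrite -dvdn_divisors.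
rewrite (bigD1_seq r rin (divisors_uniq r)) /= in E1.
rewrite [in RHS](bigD1_seq r rin (divisors_uniq r)) /= in E1.
suff Hr : \sum_(i <- divisors r | i != r) cohen_ramanujan R s i n =
          \sum_(i <- divisors r | i != r) ((cc N s n i)%:~R : R[i]).
  by rewrite Hr in E1; move/addIr: E1.
rewrite big_seq_cond [in RHS]big_seq_cond; apply: eq_bigr => d /andP[].
rewrite -dvdn_divisors // => dr dnr.
have d0 : (0 < d)%N := dvdn_gt0 r0 dr.
have dlt : (d < r)%N by rewrite ltn_neqAle dnr dvdn_leq.
by rewrite IH // (ltn_trans dlt rN).
Qed.

Unset Implicit Arguments.

Theorem theorem3 (R : realType) (k s n : nat) :
  (0 < k)%N -> (0 < s)%N -> (0 < n)%N ->
  \sum_(d <- divisors k) `|cohen_ramanujan R s d n|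
    = ((2 ^ omega ((k ^ s) %/ ggcd s (k ^ s) n) * ggcd s (k ^ s) n)%N)%:R.
Proof.
move=> k0 s0 n0.
transitivity (\sum_(d <- divisors k) ((`|cc k.+1 s n d|)%:~R : R[i])).
  apply: eq_big_seq => d; rewrite -dvdn_divisors // => dk.
  have d0 : (0 < d)%N := dvdn_gt0 k0 dk.
  by rewrite (@cr_eq R k.+1) ?intr_norm // ltnS dvdn_leq.
by rewrite -rmorph_sum sum_abs_cc // /Tk -pmulrn.
Qed.
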